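(* Let $d\ge4$ and $1\le p<d/2$ be integers. Every critical point of $\varphi_0$ in the interior of $K_0$ lies on the curve $\tilde{\mathbf{z}}:(0,\infty)\to K_0$, $x\mapsto(\tilde z_{j01}(x),\tilde z_{j10}(x))_{j\in[p]}$, where $$\tilde z_{j01}(x)=\tilde z_{j10}(x)=\frac{\tau_jx^j}{2\theta(x)}.$$ Moreover, for $x>0$, the point $\tilde{\mathbf{z}}(x)$ is a critical point of $\varphi_0$ if and only if $x$ is a root of the polynomial $$g(x)=2\bigl(p\theta(x)-\theta_1(x)\bigr)(1+x)-d\,\theta(x).$$
   Context: Let $\tau_j=\binom{d}{p}\binom{p}{j}\binom{d-p}{p-j}$ for $0\le j\le p$, $\theta(t)=\sum_{j=0}^p\tau_jt^j$ and $\theta_1(t)=\sum_{j=1}^pj\tau_jt^j$. Let $K_0\subset\mathbb{R}^{2p}$ be the set of points $(z_{j01},z_{j10})_{j\in[p]}$ with all $z_{j01},z_{j10}\ge0$ and $\sum_{j\in[p]}z_{j01}\le\frac12$, $\sum_{j\in[p]}z_{j10}\le\frac12$; set $z_{001}=\frac12-\sum_{j\in[p]}z_{j01}$ and $z_{010}=\frac12-\sum_{j\in[p]}z_{j10}$. Define $A_0=p-\sum_{j\in[p]}j(z_{j01}+z_{j10})$, $B_0=\frac d2-A_0$, and $$\varphi_0=A_0\log A_0+B_0\log B_0+\sum_{j=0}^p\sum_{(\alpha,\beta)\in\{(0,1),(1,0)\}}\bigl(z_{j\alpha\beta}\log\tau_j-z_{j\alpha\beta}\log z_{j\alpha\beta}\bigr).$$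 (This is the restriction of the function $\varphi$ to the face $z=0$, where all $z_{j00}=z_{j11}=0$.) A critical point is a point of the interior of $K_0$ where the gradient of $\varphi_0$ vanishes. *)

(* Defs.v *)
From Stdlib Require Import Reals Lra List.
From Stdlib Require Binomial.
From Coquelicot Require Import Coquelicot.
Open Scope R_scope.

Definition binR (n k : nat) : R := Binomial.C n k.

Definition sum0 (p : nat) (f : nat -> R) : R :=
  fold_right Rplus 0 (map f (seq 0 (S p))).
Definition sum1 (p : nat) (f : nat -> R) : R :=
  fold_right Rplus 0 (map f (seq 1 p)).

Definition tau (d p j : nat) : R := binR d p * binR p j * binR (d - p) (p - j).
Definition theta (d p : nat) (t : R) : R := sum0 p (fun j => tau d p j * t ^ j).
Definition theta1 (d p : nat) (t : R) : R := sum0 p (fun j => INR j * tau d p j * t ^ j)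
  (* the j = 0 term vanishes, so this equals sum_{j=1}^p j tau_j t^j *).

(* A point of R^{2p} is a pair (z01, z10) of coordinate functions; only the
   coordinates j in [p] = {1,...,p} are meaningful. *)
Definition pt := ((nat -> R) * (nat -> R))%type.

Definition z001 (p : nat) (z : pt) : R := / 2 - sum1 p (fst z).
Definition z010 (p : nat) (z : pt) : R := / 2 - sum1 p (snd z).

Definition zfull01 (p : nat) (z : pt) (j : nat) : R :=
  if Nat.eqb j 0 then z001 p z else fst z j.
Definition zfull10 (p : nat) (z : pt) (j : nat) : R :=
  if Nat.eqb j 0 then z010 p z else snd z j.

Definition A0 (p : nat) (z : pt) : R :=
  INR p - sum1 p (fun j => INR j * (fst z j + snd z j)).
Definition B0 (d p : nat) (z : pt) : R := INR d / 2 - A0 p z.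

Definition ent (c w : R) : R := w * ln c - w * ln w.

Definition phi0 (d p : nat) (z : pt) : R :=
  A0 p z * ln (A0 p z) + B0 d p z * ln (B0 d p z)
  + sum0 p (fun j => ent (tau d p j) (zfull01 p z j) + ent (tau d p j) (zfull10 p z j)).

Definition interiorK0 (p : nat) (z : pt) : Prop :=
  (forall j, (1 <= j <= p)%nat -> 0 < fst z j /\ 0 < snd z j)
  /\ sum1 p (fst z) < / 2 /\ sum1 p (snd z) < / 2.

Definition upd (f : nat -> R) (j : nat) (t : R) : nat -> R :=
  fun k => if Nat.eqb k j then t else f k.

Definition grad_zero (d p : nat) (z : pt) : Prop :=
  forall j, (1 <= j <= p)%nat ->
    is_derive (fun t => phi0 d p (upd (fst z) j t, snd z)) (fst z j) 0
    /\ is_derive (fun t => phi0 d p (fst z, upd (snd z) j t)) (snd z j) 0.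

Definition critical (d p : nat) (z : pt) : Prop :=
  interiorK0 p z /\ grad_zero d p z.

Definition ztilde (d p : nat) (x : R) : pt :=
  (fun j => tau d p j * x ^ j / (2 * theta d p x),
   fun j => tau d p j * x ^ j / (2 * theta d p x)).

Definition pt_eq (p : nat) (z w : pt) : Prop :=
  forall j, (1 <= j <= p)%nat -> fst z j = fst w j /\ snd z j = snd w j.

Definition gpoly (d p : nat) (x : R) : R :=
  2 * (INR p * theta d p x - theta1 d p x) * (1 + x) - INR d * theta d p x.

(* Main.v *)
Require Import Defs.
From Stdlib Require Import Reals Lra Lia List FunctionalExtensionality.
From Coquelicot Require Import Coquelicot.
Open Scope R_scope.

Lemma dplus (f g : R -> R) x a b : is_derive f x a -> is_derive g x b ->
  is_derive (fun t => f t + g t) x (a + b).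
Proof. intros; now apply (is_derive_plus f g). Qed.
Lemma dminus (f g : R -> R) x a b : is_derive f x a -> is_derive g x b ->
  is_derive (fun t => f t - g t) x (a - b).
Proof. intros; now apply (is_derive_minus f g). Qed.
Lemma dconst (c x : R) : is_derive (fun _ => c) x 0.
Proof. apply (is_derive_const c x). Qed.
Lemma did (x : R) : is_derive (fun t => t) x 1.
Proof. apply (is_derive_id x). Qed.
Lemma dval (f : R -> R) (x a b : R) : a = b -> is_derive f x a -> is_derive f x b.
Proof. intros ->; auto. Qed.

Lemma dcomp (h u : R -> R) x dh du : is_derive h (u x) dh -> is_derive u x du ->
  is_derive (fun t => h (u t)) x (dh * du).
Proof. intros H1 H2. rewrite Rmult_comm. now apply (is_derive_comp h u). Qed.

Lemma ent_der0 c w : 0 < w -> is_derive (ent c) w (ln c - ln w - 1).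
Proof. intros Hw. unfold ent. auto_derive. lra. field. lra. Qed.

Lemma xlnx_der0 w : 0 < w -> is_derive (fun a => a * ln a) w (ln w + 1).
Proof. intros Hw. auto_derive. lra. field. lra. Qed.

Lemma ent_der c u x du : is_derive u x du -> 0 < u x ->
  is_derive (fun t => ent c (u t)) x ((ln c - ln (u x) - 1) * du).
Proof. intros. apply dcomp; auto. now apply ent_der0. Qed.

Lemma xlnx_der u x du : is_derive u x du -> 0 < u x ->
  is_derive (fun t => u t * ln (u t)) x ((ln (u x) + 1) * du).
Proof. intros. apply (dcomp (fun a => a * ln a)); auto. now apply xlnx_der0. Qed.

Definition S (l : list nat) (h : nat -> R) : R := fold_right Rplus 0 (map h l).

Lemma S_ext l h1 h2 : (forall k, In k l -> h1 k = h2 k) -> S l h1 = S l h2.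
Proof. induction l; simpl; intros; auto. unfold S in *; simpl. rewrite H, IHl; auto. Qed.
Lemma S_le l h1 h2 : (forall k, In k l -> h1 k <= h2 k) -> S l h1 <= S l h2.
Proof. induction l; simpl; intros; unfold S in *; simpl. lra.
 apply Rplus_le_compat; auto. Qed.
Lemma S_plus l h1 h2 : S l (fun k => h1 k + h2 k) = S l h1 + S l h2.
Proof. induction l; unfold S in *; simpl; [lra|]. rewrite IHl; ring. Qed.
Lemma S_scal l c h : S l (fun k => c * h k) = c * S l h.
Proof. induction l; unfold S in *; simpl; [ring|]. rewrite IHl; ring. Qed.
Lemma S_zero l : S l (fun _ => 0) = 0.
Proof. induction l; unfold S in *; simpl; auto. rewrite IHl; ring. Qed.
Lemma S_nonneg l h : (forall k, In k l -> 0 <= h k) -> 0 <= S l h.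
Proof. intros. rewrite <- (S_zero l). apply S_le; auto. Qed.

Lemma S_indic s n j c : (s <= j < s + n)%nat ->
  S (seq s n) (fun k => if Nat.eqb k j then c else 0) = c.
Proof.
  revert s; induction n; intros s Hs; [lia|].
  simpl seq. unfold S; simpl. fold (S (seq (Datatypes.S s) n) (fun k => if Nat.eqb k j then c else 0)).
  destruct (Nat.eqb_spec s j).
  - subst. rewrite (S_ext _ _ (fun _ => 0)), S_zero. ring.
    intros k Hk. apply in_seq in Hk. destruct (Nat.eqb_spec k j); auto; lia.
  - rewrite IHn; [ring|lia].
Qed.

Lemma S_derive l (H : nat -> R -> R) (H' : nat -> R) x :
  (forall k, In k l -> is_derive (H k) x (H' k)) ->
  is_derive (fun t => S l (fun k => H k t)) x (S l H').
Proof.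
  induction l; intros Hd; unfold S in *; simpl.
  - apply dconst.
  - apply dplus; auto. apply Hd; simpl; auto. apply IHl. intros; apply Hd; simpl; auto.
Qed.
Lemma sum1_S p h : sum1 p h = S (seq 1 p) h. Proof. reflexivity. Qed.
Lemma sum0_S p h : sum0 p h = S (seq 0 (Datatypes.S p)) h. Proof. reflexivity. Qed.
Lemma S_seq0 p h : S (seq 0 (Datatypes.S p)) h = h 0%nat + S (seq 1 p) h.
Proof. reflexivity. Qed.

Lemma upd_same f j : upd f j (f j) = f.
Proof. extensionality k. unfold upd. destruct (Nat.eqb_spec k j); subst; auto. Qed.

Lemma phi0_derive d p f g j : (1 <= j <= p)%nat ->
  0 < A0 p (f,g) -> 0 < B0 d p (f,g) -> 0 < z001 p (f,g) -> 0 < f j ->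
  is_derive (fun t => phi0 d p (upd f j t, g)) (f j)
   ((ln (A0 p (f,g)) + 1) * (- INR j) + (ln (B0 d p (f,g)) + 1) * INR j
    + ((ln (tau d p 0) - ln (z001 p (f,g)) - 1) * (-1) + (ln (tau d p j) - ln (f j) - 1))).
Proof.
  intros Hj HA HB Hz Hf.
  assert (Hs1 : is_derive (fun t => sum1 p (upd f j t)) (f j) 1).
  { apply (dval _ _ (S (seq 1 p) (fun k => if Nat.eqb k j then 1 else 0))).
    apply S_indic; lia.
    apply (S_derive _ (fun k t => upd f j t k)). intros k _. unfold upd.
    destruct (Nat.eqb k j). apply did. apply dconst. }
  assert (HdA : is_derive (fun t => A0 p (upd f j t, g)) (f j) (- INR j)).
  { unfold A0; simpl fst; simpl snd.
    apply (dval _ _ (0 - S (seq 1 p) (fun k => if Nat.eqb k j then INR j else 0))).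
    rewrite S_indic by lia; ring.
    apply dminus. apply dconst.
    apply (S_derive _ (fun k t => INR k * (upd f j t k + g k))). intros k _. unfold upd.
    destruct (Nat.eqb_spec k j).
    - subst. auto_derive. auto. ring.
    - apply dconst. }
  assert (HdB : is_derive (fun t => B0 d p (upd f j t, g)) (f j) (INR j)).
  { unfold B0. apply (dval _ _ (0 - - INR j)); [ring|]. apply dminus; auto. apply dconst. }
  unfold phi0. apply dplus; [apply dplus|].
  - apply (dval _ _ ((ln (A0 p (upd f j (f j), g)) + 1) * (- INR j))); [now rewrite upd_same|].
    apply (xlnx_der (fun t => A0 p (upd f j t, g))); auto. now rewrite upd_same.
  - apply (dval _ _ ((ln (B0 d p (upd f j (f j), g)) + 1) * (INR j))); [now rewrite upd_same|].
    apply (xlnx_der (fun t => B0 d p (upd f j t, g))); auto. now rewrite upd_same.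
  - set (d0 := (ln (tau d p 0) - ln (z001 p (f, g)) - 1) * -1).
    set (dj := ln (tau d p j) - ln (f j) - 1).
    apply (dval _ _ (S (seq 0 (Datatypes.S p)) (fun k => if Nat.eqb k 0 then d0 else if Nat.eqb k j then dj else 0))).
    { rewrite S_seq0. simpl Nat.eqb at 1. f_equal.
      transitivity (S (seq 1 p) (fun k => if Nat.eqb k j then dj else 0)); [|apply S_indic; lia]. apply S_ext. intros k Hk.
      apply in_seq in Hk. destruct (Nat.eqb_spec k 0); [lia|auto]. }

    apply (S_derive _ (fun k t => ent (tau d p k) (zfull01 p (upd f j t, g) k) + ent (tau d p k) (zfull10 p (upd f j t, g) k))).
    intros k Hk. apply in_seq in Hk.
    destruct (Nat.eqb_spec k 0).
    + subst. unfold zfull01, zfull10. simpl Nat.eqb. cbv iota.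
      apply (dval _ _ (d0 + 0)); [ring|]. apply dplus.
      * unfold d0. apply (dval _ _ ((ln (tau d p 0) - ln (z001 p (upd f j (f j),g)) - 1) * -1)); [now rewrite upd_same|].
        apply (ent_der _ (fun t => z001 p (upd f j t, g))).
        unfold z001. simpl fst. apply (dval _ _ (0 - 1)); [ring|]. apply dminus; auto. apply dconst.
        rewrite upd_same; auto.
      * unfold z010; simpl snd. apply dconst.
    + unfold zfull01, zfull10. destruct (Nat.eqb_spec k 0); [lia|]. simpl fst; simpl snd.
      unfold upd. destruct (Nat.eqb_spec k j).
      * subst. apply (dval _ _ (dj + 0)); [ring|]. apply dplus; [|apply dconst].
        unfold dj. replace (ln (tau d p j) - ln (f j) - 1) with ((ln (tau d p j) - ln ((fun t => t) (f j)) - 1) * 1) by (simpl; ring).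
        apply (ent_der _ (fun t => t)). apply did. auto.
      * apply (dval _ _ (0 + 0)); [ring|]. apply dplus; apply dconst.
Qed.
Lemma A0_sym p f g : A0 p (g,f) = A0 p (f,g).
Proof. unfold A0; simpl. f_equal. apply S_ext. intros; ring. Qed.
Lemma B0_sym d p f g : B0 d p (g,f) = B0 d p (f,g).
Proof. unfold B0; now rewrite A0_sym. Qed.
Lemma phi0_sym d p f g : phi0 d p (g,f) = phi0 d p (f,g).
Proof.
  unfold phi0. rewrite A0_sym, B0_sym. f_equal. apply S_ext. intros k _.
  unfold zfull01, zfull10, z001, z010; simpl. destruct (Nat.eqb k 0); ring.
Qed.

Definition Dv d p (f g : nat -> R) j : R :=
  INR j * (ln (B0 d p (f,g)) - ln (A0 p (f,g))) + ln (tau d p j) - ln (f j)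
  - ln (tau d p 0) + ln (z001 p (f,g)).

Lemma tau_pos d p k : 0 < tau d p k.
Proof.
  assert (Hb : forall n m, 0 < binR n m).
  { intros n m. unfold binR, Binomial.C. apply Rdiv_lt_0_compat.
    apply INR_fact_lt_0. apply Rmult_lt_0_compat; apply INR_fact_lt_0. }
  unfold tau. apply Rmult_lt_0_compat; [apply Rmult_lt_0_compat|]; auto.
Qed.

Lemma interior_pos d p f g : (1 <= p)%nat -> (2 * p < d)%nat -> interiorK0 p (f,g) ->
  0 < A0 p (f,g) /\ 0 < B0 d p (f,g) /\ 0 < z001 p (f,g) /\ 0 < z010 p (f,g).
Proof.
  intros Hp Hd [Hpos [H1 H2]]. simpl in *.
  assert (Hle : sum1 p (fun k => INR k * (f k + g k)) <= INR p * (sum1 p f + sum1 p g)).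
  { rewrite !sum1_S, <- S_plus, <- S_scal. apply S_le. intros k Hk. apply in_seq in Hk.
    destruct (Hpos k) as [a b]; [lia|]. apply Rmult_le_compat_r; [lra|]. apply le_INR; lia. }
  assert (Hge : 0 <= sum1 p (fun k => INR k * (f k + g k))).
  { apply S_nonneg. intros k Hk. apply in_seq in Hk.
    destruct (Hpos k) as [a b]; [lia|]. apply Rmult_le_pos; [apply pos_INR|lra]. }
  assert (HP : 1 <= INR p) by (apply (le_INR 1); lia).
  assert (HD : INR (2 * p) < INR d) by (apply lt_INR; lia). rewrite mult_INR in HD. simpl INR in HD at 1.
  unfold A0, B0, z001, z010, A0; simpl. repeat split; try nra.
Qed.

Lemma grad_iff d p f g : (1 <= p)%nat -> (2 * p < d)%nat -> interiorK0 p (f,g) ->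
  (grad_zero d p (f,g) <-> forall j, (1 <= j <= p)%nat -> Dv d p f g j = 0 /\ Dv d p g f j = 0).
Proof.
  intros Hp Hd Hi.
  assert (Hi' : interiorK0 p (g,f)).
  { destruct Hi as [Ha [Hb Hc]]. split; [|simpl in *; tauto]. intros j Hj; destruct (Ha j Hj); simpl in *; tauto. }
  destruct (interior_pos d p f g Hp Hd Hi) as [HA [HB [Hz1 Hz2]]].
  destruct (interior_pos d p g f Hp Hd Hi') as [HA' [HB' [Hz1' Hz2']]].
  assert (Dd : forall j, (1 <= j <= p)%nat ->
    is_derive (fun t => phi0 d p (upd f j t, g)) (f j) (Dv d p f g j) /\
    is_derive (fun t => phi0 d p (f, upd g j t)) (g j) (Dv d p g f j)).
  { intros j Hj. destruct Hi as [Ha _]. destruct (Ha j Hj) as [Hf Hg]. simpl in Hf, Hg. split.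
    - eapply dval; [|apply phi0_derive; auto]. unfold Dv. ring.
    - apply (is_derive_ext (fun t => phi0 d p (upd g j t, f))).
      { intros t. apply phi0_sym. }
      eapply dval; [|apply phi0_derive; auto]. unfold Dv. ring. }
  split.
  - intros G j Hj. destruct (G j Hj) as [G1 G2]. destruct (Dd j Hj) as [D1 D2]. cbn [fst snd] in G1, G2.
    apply is_derive_unique in G1, G2, D1, D2. split; [rewrite <- D1, G1 | rewrite <- D2, G2]; reflexivity.
  - intros G j Hj. destruct (G j Hj) as [G1 G2]. destruct (Dd j Hj) as [D1 D2].
    cbn [fst snd]. split; [rewrite <- G1 | rewrite <- G2]; tauto.
Qed.
Lemma solve_h (A B c hj tj t0 : R) (j : nat) : 0 < A -> 0 < B -> 0 < c -> 0 < hj -> 0 < tj -> 0 < t0 ->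
  INR j * (ln B - ln A) + ln tj - ln hj - ln t0 + ln c = 0 -> hj = tj * (B / A) ^ j * c / t0.
Proof.
  intros. assert (0 < B / A) by (apply Rdiv_lt_0_compat; auto).
  apply ln_inv; auto. apply Rdiv_lt_0_compat; auto. repeat apply Rmult_lt_0_compat; auto. apply pow_lt; auto.
  rewrite ln_div, !ln_mult, ln_pow, ln_div; auto; try lra.
  apply pow_lt; auto. apply Rmult_lt_0_compat; auto. apply pow_lt; auto.
  repeat apply Rmult_lt_0_compat; auto. apply pow_lt; auto.
Qed.

Definition T d p x := S (seq 1 p) (fun k => tau d p k * x ^ k).
Lemma theta_T d p x : theta d p x = tau d p 0 + T d p x.
Proof. unfold theta. rewrite sum0_S, S_seq0. unfold T. cbv beta. rewrite pow_O. ring. Qed.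
Lemma T_nonneg d p x : 0 < x -> 0 <= T d p x.
Proof. intros. apply S_nonneg. intros. pose proof (tau_pos d p k). pose proof (pow_lt x k H). nra. Qed.

Lemma solve_c d p (h : nat -> R) c x : 0 < x ->
  (forall j, (1 <= j <= p)%nat -> h j = tau d p j * x ^ j * c / tau d p 0) ->
  c = / 2 - sum1 p h ->
  forall j, (1 <= j <= p)%nat -> h j = tau d p j * x ^ j / (2 * theta d p x).
Proof.
  intros Hx Hh Hc j Hj.
  assert (Hs : sum1 p h = c / tau d p 0 * T d p x).
  { rewrite sum1_S. unfold T. rewrite <- S_scal. apply S_ext. intros k Hk. apply in_seq in Hk.
    rewrite Hh by lia. field. apply Rgt_not_eq, tau_pos. }
  pose proof (tau_pos d p 0). pose proof (T_nonneg d p x Hx).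
  rewrite theta_T. rewrite Hh by auto.
  assert (Hc2 : c = tau d p 0 / (2 * (tau d p 0 + T d p x))).
  { rewrite Hs in Hc.
    assert (E : c * tau d p 0 = tau d p 0 / 2 - c * T d p x) by (rewrite Hc at 1; field; lra).
    apply (Rmult_eq_reg_r (2 * (tau d p 0 + T d p x))); [|nra].
    replace (tau d p 0 / (2 * (tau d p 0 + T d p x)) * (2 * (tau d p 0 + T d p x))) with (tau d p 0) by (field; lra).
    nra. }
  rewrite Hc2. field. lra.
Qed.
Definition T1 d p x := S (seq 1 p) (fun k => INR k * tau d p k * x ^ k).
Lemma theta1_T d p x : theta1 d p x = T1 d p x.
Proof. unfold theta1. rewrite sum0_S, S_seq0. unfold T1. cbv beta. simpl INR. ring. Qed.

Theorem lemmaA5 (d p : nat) (hd : (4 <= d)%nat) (hp1 : (1 <= p)%nat)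
    (hp2 : (2 * p < d)%nat) :
  (forall z : pt, critical d p z -> exists x : R, 0 < x /\ pt_eq p z (ztilde d p x))
  /\ (forall x : R, 0 < x -> (critical d p (ztilde d p x) <-> gpoly d p x = 0)).
Proof.
  split.
  - intros [f g] [Hi G].
    destruct (interior_pos d p f g hp1 hp2 Hi) as [HA [HB [Hz1 Hz2]]].
    pose proof (proj1 (grad_iff d p f g hp1 hp2 Hi) G) as G0. clear G. rename G0 into G.
    assert (Hx : 0 < B0 d p (f,g) / A0 p (f,g)) by (apply Rdiv_lt_0_compat; auto).
    exists (B0 d p (f,g) / A0 p (f,g)). split; auto.
    assert (Hf : forall j, (1 <= j <= p)%nat -> f j = tau d p j * (B0 d p (f,g) / A0 p (f,g)) ^ j * z001 p (f,g) / tau d p 0).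
    { intros j Hj. destruct (G j Hj) as [G1 _]. unfold Dv in G1. apply solve_h; auto; try apply tau_pos.
      destruct Hi as [Ha _]. apply (Ha j Hj). }
    assert (Hg : forall j, (1 <= j <= p)%nat -> g j = tau d p j * (B0 d p (f,g) / A0 p (f,g)) ^ j * z010 p (f,g) / tau d p 0).
    { intros j Hj. destruct (G j Hj) as [_ G2]. unfold Dv in G2. rewrite A0_sym, B0_sym in G2.
      change (z001 p (g,f)) with (z010 p (f,g)) in G2.
      apply solve_h; auto; try apply tau_pos.
      destruct Hi as [Ha _]. apply (Ha j Hj). }
    intros j Hj. simpl. split.
    + apply (solve_c d p f (z001 p (f,g))); auto.
    + apply (solve_c d p g (z010 p (f,g))); auto.
  - intros x Hx.
    pose proof (tau_pos d p 0) as Ht0. pose proof (T_nonneg d p x Hx) as HT.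
    assert (Hth : 0 < theta d p x) by (rewrite theta_T; lra).
    set (h := fun j => tau d p j * x ^ j / (2 * theta d p x)).
    change (ztilde d p x) with (h, h).
    assert (Hhpos : forall j, 0 < h j).
    { intros j. unfold h. apply Rdiv_lt_0_compat; [|lra]. apply Rmult_lt_0_compat; [apply tau_pos|apply pow_lt; auto]. }
    assert (Hs : sum1 p h = T d p x / (2 * theta d p x)).
    { rewrite sum1_S. unfold T, Rdiv. rewrite Rmult_comm, <- S_scal. apply S_ext. intros; unfold h. field. lra. }
    assert (Hi : interiorK0 p (h,h)).
    { split; [intros; simpl; auto|]. simpl. rewrite Hs. rewrite theta_T in *.
      assert (T d p x / (2 * (tau d p 0 + T d p x)) < / 2).
      { apply (Rmult_lt_reg_r (2 * (tau d p 0 + T d p x))); [lra|].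
        replace (T d p x / (2 * (tau d p 0 + T d p x)) * (2 * (tau d p 0 + T d p x))) with (T d p x) by (field; lra).
        replace (/ 2 * (2 * (tau d p 0 + T d p x))) with (tau d p 0 + T d p x) by field. lra. }
      lra. }
    destruct (interior_pos d p h h hp1 hp2 Hi) as [HA [HB [Hz1 Hz2]]].
    assert (Hz : z001 p (h,h) = tau d p 0 / (2 * theta d p x)).
    { unfold z001. simpl. rewrite Hs, theta_T. field. lra. }
    assert (HAe : A0 p (h,h) = INR p - T1 d p x / theta d p x).
    { unfold A0. simpl. f_equal. rewrite sum1_S. unfold T1, Rdiv. rewrite Rmult_comm, <- S_scal.
      apply S_ext. intros; unfold h. field. lra. }
    assert (HD : forall j, Dv d p h h j = INR j * (ln (B0 d p (h,h)) - ln (A0 p (h,h)) - ln x)).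
    { intros j. unfold Dv. rewrite Hz. unfold h.
      pose proof (tau_pos d p j).
      rewrite !ln_div, ln_mult, ln_pow; auto; try lra.
      apply pow_lt; auto. apply Rmult_lt_0_compat; auto. apply pow_lt; auto. }
    assert (Hg : gpoly d p x = 2 * theta d p x * (A0 p (h,h) * x - B0 d p (h,h))).
    { unfold gpoly, B0. rewrite theta1_T, HAe. field. lra. }
    unfold critical. rewrite grad_iff; auto. rewrite Hg.
    split.
    + intros [_ G]. destruct (G 1%nat) as [G1 _]; [lia|]. rewrite HD in G1. simpl INR in G1.
      assert (E : ln (B0 d p (h,h)) = ln (A0 p (h,h) * x)) by (rewrite ln_mult; auto; lra).
      apply ln_inv in E; auto. rewrite E. ring. apply Rmult_lt_0_compat; auto.
    + intros E. split; auto. intros j Hj. rewrite HD.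
      assert (E' : B0 d p (h,h) = A0 p (h,h) * x).
      { apply Rmult_eq_reg_l with (2 * theta d p x); [|lra]. lra. }
      rewrite E', ln_mult; auto. split; ring.
Qed.
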